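(* Let $f$ be a connectivity function on a finite set $V$ and let $f^*$ be an interpolation of $f$. Let $A,B,S,T$ be pairwise disjoint subsets of $V$, and let $D$ be the blocking digraph for $(S,T)$ with respect to $f^*$. Then $f^*(S\cup A,T\cup B)=f^*(S,T)$ if and only if $D$ has no arc from a vertex of $A\cup\{S^\circ\}$ to a vertex of $B\cup\{T^\circ\}$.
   Context: A connectivity function on a finite set $V$ is a function $f:2^V\to\mathbb Z$ such that $f(X)=f(V-X)$ for all $X\subseteq V$, $f(X)+f(Y)\ge f(X\cup Y)+f(X\cap Y)$ for all $X,Y\subseteq V$, and $f(\emptyset)=0$. An interpolation of $f$ is a function $f^*$ defined on pairs $(X,Y)$ of disjoint subsets of $V$, with integer values, such that (i) $f^*(X,V-X)=f(X)$ for all $X\subseteq V$; (ii) if $C\cap D=\emptyset$, $A\subseteq C$, $B\subseteq D$ then $f^*(A,B)\le f^*(C,D)$; (iii) $f^*(A,B)+f^*(C,D)\ge f^*(A\cap C,B\cup D)+f^*(A\cup C,B\cap D)$ for all such pairs $(A,B),(C,D)$; (iv) $f^*(\emptyset,\emptyset)=f(\emptyset)$. For disjoint $S,T\subseteq V$, the blocking digraph for $(S,T)$ with respect to $f^*$ is the digraph on vertex set $(V-(S\cup T))\cup\{S^\circ,T^\circ\}$ (with $S^\circ,T^\circ$ two new vertices) with arcs: $(S^\circ,x)$ for $x\in V-(S\cup T)$ whenever $f^*(S,T\cup\{x\})>f^*(S,T)$; $(x,T^\circ)$ for $x\in V-(S\cup T)$ whenever $f^*(S\cup\{x\},T)>f^*(S,T)$;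 and $(x,y)$ for distinct $x,y\in V-(S\cup T)$ whenever $f^*(S\cup\{x\},T\cup\{y\})>f^*(S,T)$. *)

(* Defs.v *)
From mathcomp Require Import all_boot all_order all_algebra.
Set Implicit Arguments. Unset Strict Implicit. Unset Printing Implicit Defensive.
Import Order.TTheory GRing.Theory Num.Theory.
Local Open Scope ring_scope.

Section Conn.
Variable V : finType.

Definition connectivity_function (f : {set V} -> int) : Prop :=
  [/\ (forall X : {set V}, f X = f (~: X)),
      (forall X Y : {set V}, f (X :|: Y) + f (X :&: Y) <= f X + f Y)
    & f set0 = 0].

(* f* is modelled as a total function on pairs of subsets; only its values on
   disjoint pairs are constrained (and used). *)
Definition interpolation (f : {set V} -> int)
    (fs : {set V} -> {set V} -> int) : Prop :=
  [/\ (forall X : {set V}, fs X (~: X) = f X),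
      (forall A B C D : {set V}, [disjoint C & D] -> A \subset C -> B \subset D ->
          fs A B <= fs C D),
      (forall A B C D : {set V}, [disjoint A & B] -> [disjoint C & D] ->
          fs (A :&: C) (B :|: D) + fs (A :|: C) (B :&: D) <= fs A B + fs C D)
    & fs set0 set0 = f set0].

(* vertices of the blocking digraph: S°, T°, and elements of V (only those
   outside S ∪ T are vertices; see [bvertex]) *)
Inductive bvert := SO | TO | Vx of V.

Definition bvertex (S T : {set V}) (u : bvert) : bool :=
  match u with Vx x => x \notin S :|: T | _ => true end.

Definition blocking_arc (fs : {set V} -> {set V} -> int) (S T : {set V})
    (u v : bvert) : bool :=
  match u, v with
  | SO, Vx x => (x \notin S :|: T) && (fs S T < fs S (x |: T))
  | Vx x, TO => (x \notin S :|: T) && (fs S T < fs (x |: S) T)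
  | Vx x, Vx y => [&& x != y, x \notin S :|: T, y \notin S :|: T &
                      fs S T < fs (x |: S) (y |: T)]
  | _, _ => false
  end.

Definition in_src (A : {set V}) (u : bvert) : bool :=
  match u with SO => true | Vx x => x \in A | TO => false end.
Definition in_tgt (B : {set V}) (u : bvert) : bool :=
  match u with TO => true | Vx x => x \in B | SO => false end.

End Conn.

(* Main.v *)
Require Import Defs.
From mathcomp Require Import all_boot all_order all_algebra.
Import Order.TTheory GRing.Theory Num.Theory.
Local Open Scope ring_scope.

Section Aux.
Variable V : finType.
Variable fs : {set V} -> {set V} -> int.
Hypothesis mono : forall A B C D : {set V}, [disjoint C & D] -> A \subset C -> B \subset D ->
          fs A B <= fs C D.
Hypothesis subm : forall A B C D : {set V}, [disjoint A & B] -> [disjoint C & D] ->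
          fs (A :&: C) (B :|: D) + fs (A :|: C) (B :&: D) <= fs A B + fs C D.

Lemma disjI (A B : {set V}) : (forall z, z \in A -> z \in B -> False) -> [disjoint A & B].
Proof.
move=> H; rewrite -setI_eq0; apply/eqP/setP => z; rewrite !inE.
by apply/negbTE/andP => -[] /H h /h.
Qed.

Lemma lemY (X Y B : {set V}) : [disjoint X & Y :|: B] ->
  (forall y, y \in B -> fs X (y |: Y) <= fs X Y) ->
  fs X (Y :|: B) <= fs X Y.
Proof.
move=> dXYB hB.
have key : forall s : seq V, {subset s <= B} -> fs X (Y :|: [set z in s]) <= fs X Y.
  elim=> [|y s IH] sub.
    have -> : Y :|: [set z in [::]] = Y by apply/setP => z; rewrite !inE orbF.
    by [].
  have yB : y \in B by apply: sub; rewrite inE eqxx.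
  have IH' : fs X (Y :|: [set z in s]) <= fs X Y.
    by apply: IH => z zs; apply: sub; rewrite inE zs orbT.
  case ys: (y \in s).
    have -> : Y :|: [set z in y :: s] = Y :|: [set z in s].
      by apply/setP => z; rewrite !inE; case: eqP => // ->; rewrite ys !orbT.
    exact IH'.
  have d1 : [disjoint X & Y :|: [set z in s]].
    apply: disjI => z zX; have := disjointFr dXYB zX; rewrite !inE => hz /orP[zY|zs].
      by rewrite zY in hz.
    by rewrite (sub z) ?orbT ?inE ?zs ?orbT in hz.
  have d2 : [disjoint X & y |: Y].
    apply: disjI => z zX; have := disjointFr dXYB zX; rewrite !inE => hz /orP[/eqP zy|zY].
      by rewrite zy yB orbT in hz.
    by rewrite zY in hz.
  have := @subm _ _ _ _ d1 d2; rewrite setIid setUid.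
  have -> : (Y :|: [set z in s]) :|: (y |: Y) = Y :|: [set z in y :: s].
    by apply/setP => z; rewrite !inE; case: (z == y); case: (z \in Y); case: (z \in s).
  have -> : (Y :|: [set z in s]) :&: (y |: Y) = Y.
    apply/setP => z; rewrite !inE; case: eqP => [->|_]; rewrite ?ys;
      by case: (_ \in Y); rewrite ?andbT ?andbF.
  have := hB y yB.
  move=> h1 h2.
  have h3 := lerD IH' h1.
  have h4 := le_trans h2 h3.
  by rewrite lerD2r in h4.
have -> : B = [set z in enum B] by apply/setP => z; rewrite !inE mem_enum.
by apply: key => z; rewrite mem_enum.
Qed.

Lemma lemX (X Y B : {set V}) : [disjoint Y :|: B & X] ->
  (forall y, y \in B -> fs (y |: Y) X <= fs Y X) ->
  fs (Y :|: B) X <= fs Y X.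
Proof.
move=> dXYB hB.
have key : forall s : seq V, {subset s <= B} -> fs (Y :|: [set z in s]) X <= fs Y X.
  elim=> [|y s IH] sub.
    have -> : Y :|: [set z in [::]] = Y by apply/setP => z; rewrite !inE orbF.
    by [].
  have yB : y \in B by apply: sub; rewrite inE eqxx.
  have IH' : fs (Y :|: [set z in s]) X <= fs Y X.
    by apply: IH => z zs; apply: sub; rewrite inE zs orbT.
  case ys: (y \in s).
    have -> : Y :|: [set z in y :: s] = Y :|: [set z in s].
      by apply/setP => z; rewrite !inE; case: eqP => // ->; rewrite ys !orbT.
    exact IH'.
  have d1 : [disjoint Y :|: [set z in s] & X].
    apply: disjI => z; rewrite [z \in _ :|: _]inE => zz zX; have := disjointFl dXYB zX; rewrite !inE => hz; move: zz; rewrite !inE => /orP[zY|zs].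
      by rewrite zY in hz.
    by rewrite (sub z) ?orbT ?inE ?zs ?orbT in hz.
  have d2 : [disjoint y |: Y & X].
    apply: disjI => z; rewrite [z \in _ :|: _]inE => zz zX; have := disjointFl dXYB zX; rewrite !inE => hz; move: zz; rewrite !inE => /orP[/eqP zy|zY].
      by rewrite zy yB orbT in hz.
    by rewrite zY in hz.
  have := @subm _ _ _ _ d1 d2; rewrite setIid setUid.
  rewrite addrC.
  have -> : (Y :|: [set z in s]) :|: (y |: Y) = Y :|: [set z in y :: s].
    by apply/setP => z; rewrite !inE; case: (z == y); case: (z \in Y); case: (z \in s).
  have -> : (Y :|: [set z in s]) :&: (y |: Y) = Y.
    apply/setP => z; rewrite !inE; case: eqP => [->|_]; rewrite ?ys;
      by case: (_ \in Y); rewrite ?andbT ?andbF.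
  have := hB y yB.
  move=> h1 h2.
  have h3 := lerD IH' h1.
  have h4 := le_trans h2 h3.
  by rewrite lerD2r in h4.
have -> : B = [set z in enum B] by apply/setP => z; rewrite !inE mem_enum.
by apply: key => z; rewrite mem_enum.
Qed.

End Aux.
Theorem lemma3p1 (V : finType) (f : {set V} -> int)
    (fs : {set V} -> {set V} -> int) (A B S T : {set V}) :
  connectivity_function f -> interpolation f fs ->
  [disjoint A & B] -> [disjoint A & S] -> [disjoint A & T] ->
  [disjoint B & S] -> [disjoint B & T] -> [disjoint S & T] ->
  (fs (S :|: A) (T :|: B) = fs S T <->
   (forall u v : bvert V, in_src A u -> in_tgt B v ->
      ~~ blocking_arc fs S T u v)).
Proof.
move=> _ [_ mono subm _] dAB dAS dAT dBS dBT dST.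
have nA : forall x, x \in A -> (x \in S = false) /\ (x \in T = false) /\ (x \in B = false).
  by move=> x xA; rewrite (disjointFr dAS xA) (disjointFr dAT xA) (disjointFr dAB xA).
have nB : forall x, x \in B -> (x \in S = false) /\ (x \in T = false) /\ (x \in A = false).
  by move=> x xB; rewrite (disjointFr dBS xB) (disjointFr dBT xB) (disjointFl dAB xB).
have dBig : [disjoint S :|: A & T :|: B].
  apply: disjI => z; rewrite !inE => /orP[zS|zA] /orP[zT|zB].
  - by rewrite (disjointFr dST zS) in zT.
  - by have [h _] := nB z zB; rewrite h in zS.
  - by have [_ [h _]] := nA z zA; rewrite h in zT.
  - by have [_ [_ h]] := nA z zA; rewrite h in zB.
have ge : fs S T <= fs (S :|: A) (T :|: B) by apply: mono => //; apply: subsetUl.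
split.
  move=> eq u v; case: u => [|//|x]; case: v => [//|//|y] /=.
  - move=> _ yB; rewrite negb_and -leNgt; apply/orP; right.
    rewrite -eq; apply: mono => //.
      by apply: subsetUl.
    by apply/subsetP => z; rewrite !inE => /orP[/eqP ->|->]; rewrite ?yB ?orbT.
  - move=> xA _; rewrite negb_and -leNgt; apply/orP; right.
    rewrite -eq; apply: mono => //.
      by apply/subsetP => z; rewrite !inE => /orP[/eqP ->|->]; rewrite ?xA ?orbT.
    by apply: subsetUl.
  - move=> xA yB; rewrite !negb_and -leNgt; apply/orP; right; apply/orP; right; apply/orP; right.
    rewrite -eq; apply: mono => //.
      by apply/subsetP => z; rewrite !inE => /orP[/eqP ->|->]; rewrite ?xA ?orbT.
    by apply/subsetP => z; rewrite !inE => /orP[/eqP ->|->]; rewrite ?yB ?orbT.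
move=> H; apply/eqP; rewrite eq_le; rewrite ge andbT.
have aTO : forall x, x \in A -> fs (x |: S) T <= fs S T.
  move=> x xA; have := H (Vx x) (TO V) xA isT; rewrite /= negb_and -leNgt => /orP[|//].
  by have [h1 [h2 _]] := nA x xA; rewrite !inE h1 h2.
have aXY : forall x y, x \in A -> y \in B -> fs (x |: S) (y |: T) <= fs S T.
  move=> x y xA yB; have := H (Vx x) (Vx y) xA yB.
  have [h1 [h2 h3]] := nA x xA; have [k1 [k2 k3]] := nB y yB.
  rewrite /= !inE h1 h2 k1 k2 /= negb_and -leNgt => /orP[|//].
  by rewrite negbK => /eqP xy; rewrite xy k3 in xA.
have monoS : forall x, x \in A -> fs S T <= fs (x |: S) T.
  move=> x xA; apply: mono; last by [].
    apply: disjI => z; rewrite !inE => /orP[/eqP ->|zS] zT.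
      by have [_ [h _]] := nA x xA; rewrite h in zT.
    by rewrite (disjointFr dST zS) in zT.
  by apply: subsetUr.
have monoT : forall X : {set V}, X \subset B -> fs S T <= fs S (T :|: X).
  move=> X XB; apply: mono => //; last by apply: subsetUl.
  apply: disjI => z zS; rewrite !inE => /orP[zT|zX].
    by rewrite (disjointFr dST zS) in zT.
  by have [h _] := nB z (subsetP XB z zX); rewrite h in zS.
have s1 : fs S (T :|: B) <= fs S T.
  apply: lemY => //.
    apply: disjI => z zS; rewrite !inE => /orP[zT|zB].
      by rewrite (disjointFr dST zS) in zT.
    by have [h _] := nB z zB; rewrite h in zS.
  move=> y yB; have := H (SO V) (Vx y) isT yB; rewrite /= negb_and -leNgt => /orP[|//].
  by have [h1 [h2 _]] := nB y yB; rewrite !inE h1 h2.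
have s2 : forall x, x \in A -> fs (x |: S) (T :|: B) <= fs S T.
  move=> x xA; apply: le_trans (aTO x xA).
  apply: lemY => //.
    apply: disjI => z; rewrite !inE => /orP[/eqP ->|zS] /orP[zT|zB].
    - by have [_ [h _]] := nA x xA; rewrite h in zT.
    - by have [_ [_ h]] := nA x xA; rewrite h in zB.
    - by rewrite (disjointFr dST zS) in zT.
    - by have [h _] := nB z zB; rewrite h in zS.
  move=> y yB; exact: le_trans (aXY x y xA yB) (monoS x xA).
apply: le_trans s1.
apply: lemX => //.
move=> x xA; apply: le_trans (s2 x xA) _.
exact: monoT.
Qed.
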